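(* Let $\Lambda\subset\mathbb{R}^2$ be a $2$-dimensional lattice and let $C\subset\mathbb{R}^2$ be a convex body that is lattice reduced or lattice complete with respect to $\Lambda$. Then $\mathrm{diam}_\Lambda(C)\le\mathrm{wdt}_\Lambda(C)$.
   Context: A lattice $\Lambda\subset\mathbb{R}^2$ is a discrete subgroup spanning $\mathbb{R}^2$; $\Lambda^\star=\{y: x\cdot y\in\mathbb{Z}\ \forall x\in\Lambda\}$. For a convex body $C$ (compact convex, non-empty interior): $\mathrm{wdt}_\Lambda(C)=\min_{y\in\Lambda^\star\setminus\{0\}}\max_{a,b\in C}y\cdot(a-b)$; a segment $[a,b]$ is a lattice segment if $b-a$ is parallel to a nonzero vector of $\Lambda$, with lattice length $|b-a|/|v|$ where $v$ generates $\Lambda\cap\mathrm{span}\{b-a\}$ and is a positive multiple of $b-a$; $\mathrm{diam}_\Lambda(C)$ is the maximum lattice length of a lattice segment in $C$. $C$ is lattice reduced if no convex body $C'\subsetneq C$ has the same lattice width, lattice complete if no convex body $C'\supsetneq C$ has the same lattice diameter. *)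

(* Defs.v *)
From HB Require Import structures.
From mathcomp Require Import all_boot all_order all_algebra.
From mathcomp Require Import all_classical all_reals topology normedtype.
Import numFieldNormedType.Exports.
Set Implicit Arguments. Unset Strict Implicit. Unset Printing Implicit Defensive.
Import Order.TTheory GRing.Theory Num.Theory.
Local Open Scope classical_set_scope.
Local Open Scope ring_scope.

Section Defs.
Variable R : realType.
Notation pt := (R * R)%type.

Definition dot (u v : pt) : R := u.1 * v.1 + u.2 * v.2.
Definition scl (t : R) (u : pt) : pt := (t * u.1, t * u.2).

Definition enorm (u : pt) : R := Num.sqrt (dot u u).

Definition is_lattice (L : set pt) : Prop :=
  [/\ L 0,
      (forall x y, L x -> L y -> L (x - y)),
      (exists2 e : R, 0 < e & forall x, L x -> enorm x < e -> x = 0) &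
      (exists u v, [/\ L u, L v & u.1 * v.2 - u.2 * v.1 != 0])].

Definition dual_lattice (L : set pt) : set pt :=
  [set y | forall x, L x -> exists k : int, dot x y = k%:~R].

Definition convex2 (C : set pt) : Prop :=
  forall a b (t : R), C a -> C b -> 0 <= t <= 1 -> C (a + scl t (b - a)).

Definition convex_body (C : set pt) : Prop :=
  [/\ compact C, convex2 C & (C°) !=set0].

Definition dir_width (y : pt) (C : set pt) : R :=
  sup [set dot y (a - b) | a in C & b in C].

Definition lattice_width (L C : set pt) : R :=
  inf [set dir_width y C | y in [set y | dual_lattice L y /\ y <> 0]].

(* v is the generator of L ∩ span{w} that is a positive multiple of w *)
Definition prim_gen (L : set pt) (w v : pt) : Prop :=
  [/\ L v, v <> 0, (exists2 t : R, 0 < t & v = scl t w) &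
      (forall z, L z -> (exists s : R, z = scl s w) -> exists k : int, z = scl k%:~R v)].

Definition lattice_segment (L : set pt) (a b : pt) (l : R) : Prop :=
  a != b /\ exists v, prim_gen L (b - a) v /\ l = enorm (b - a) / enorm v.

Definition seg_in (C : set pt) (a b : pt) : Prop :=
  forall t : R, 0 <= t <= 1 -> C (a + scl t (b - a)).

Definition lattice_diam (L C : set pt) : R :=
  sup [set l | exists a b, seg_in C a b /\ lattice_segment L a b l].

Definition lattice_reduced (L C : set pt) : Prop :=
  ~ exists C', [/\ convex_body C', C' `<` C & lattice_width L C' = lattice_width L C].

Definition lattice_complete (L C : set pt) : Prop :=
  ~ exists C', [/\ convex_body C', C `<` C' & lattice_diam L C' = lattice_diam L C].

End Defs.

(* Main.v *)
Require Import Defs.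
From HB Require Import structures.
From mathcomp Require Import all_boot all_order all_algebra.
From mathcomp Require Import all_classical all_reals topology normedtype.
From mathcomp Require Import lra zify ring.
Import numFieldNormedType.Exports.
Import Order.TTheory GRing.Theory Num.Theory.
Local Open Scope classical_set_scope.
Local Open Scope ring_scope.
Set Implicit Arguments. Unset Strict Implicit. Unset Printing Implicit Defensive.
Section S. Variable R : realType.
Notation pt := (R * R)%type.
Implicit Types (C : set pt) (x y a b u w : pt).

Lemma lin_cont (a b : R) : continuous (fun x : pt => a * x.1 + b * x.2).
Proof.
move=> x. apply: cvgD.
  apply: cvgMr. exact: cvg_fst.
apply: cvgMr. exact: cvg_snd.
Qed.

Lemma nbhs_pt (z : pt) (A : set pt) :
  nbhs z A <-> exists2 r : R, 0 < r & forall w : pt, `|w.1 - z.1| < r -> `|w.2 - z.2| < r -> A w.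
Proof.
split.
  move=> /nbhs_ballP [r r0 H]. exists r => // w h1 h2. apply: H.
  split => /=; rewrite -ball_normE /= distrC //.
move=> [r r0 H]. apply/nbhs_ballP. exists r => // w [h1 h2]. apply: H.
 move: h1; rewrite -ball_normE /= distrC //.
 move: h2; rewrite -ball_normE /= distrC //.
Qed.

Lemma pt_eq (u w : pt) : u.1 = w.1 -> u.2 = w.2 -> u = w.
Proof. by case: u w => ? ? [? ?] /= -> ->. Qed.

Definition bnd C (B : R) := forall x, C x -> `|x.1| <= B /\ `|x.2| <= B.

Lemma compact_bnd C : compact C -> exists2 B, 0 < B & bnd C B.
Proof.
move=> cC.
have c1 : compact (fst @` C).
  apply: continuous_compact => //. apply: continuous_subspaceT => x. exact: cvg_fst.
have c2 : compact (snd @` C).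
  apply: continuous_compact => //. apply: continuous_subspaceT => x. exact: cvg_snd.
have [M1 [_ H1]] := compact_bounded c1.
have [M2 [_ H2]] := compact_bounded c2.
exists (`|M1| + `|M2| + 1).
  by have := normr_ge0 M2; have := normr_ge0 M1; lra.
move=> x Cx; split.
  have := H1 (`|M1| + `|M2| + 1) _ x.1 _; apply.
   by have := ler_norm M1; have := normr_ge0 M2; lra.
   by exists x.
have := H2 (`|M1| + `|M2| + 1) _ x.2 _; apply.
   by have := ler_norm M2; have := normr_ge0 M1; lra.
   by exists x.
Qed.

Lemma mul_le_abs (u w K : R) : `|w| <= K -> u * w <= `|u| * K.
Proof.
move=> h. apply: (le_trans (ler_norm _)). rewrite normrM. apply: ler_wpM2l => //.
Qed.

Lemma dot_bnd C B y a b : bnd C B -> C a -> C b ->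
  `|dot y (a - b)| <= (`|y.1| + `|y.2|) * (B + B).
Proof.
move=> hB /hB [a1 a2] /hB [b1 b2]. rewrite /dot /=.
apply: (le_trans (ler_normD _ _)). rewrite mulrDl !normrM.
apply: lerD; apply: ler_wpM2l => //; apply: (le_trans (ler_normB _ _)); exact: lerD.
Qed.

Definition dwset y C := [set dot y (a - b) | a in C & b in C].

Lemma dw_has_sup C B y : bnd C B -> C !=set0 -> has_sup (dwset y C).
Proof.
move=> hB [c Cc]; split; first by exists (dot y (c - c)); exists c => //; exists c.
exists ((`|y.1| + `|y.2|) * (B + B)) => z [a Ca [b Cb <-]].
exact: le_trans (ler_norm _) (dot_bnd y hB Ca Cb).
Qed.

Lemma dw_ub C B y a b : bnd C B -> C a -> C b -> dot y (a - b) <= dir_width y C.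
Proof.
move=> hB Ca Cb. apply: sup_upper_bound; first exact: (dw_has_sup y hB (ex_intro _ a Ca)).
by exists a => //; exists b.
Qed.

Lemma dw_lub C y X : C !=set0 -> (forall a b, C a -> C b -> dot y (a - b) <= X) ->
  dir_width y C <= X.
Proof.
move=> [c Cc] H. apply: ge_sup; first by exists (dot y (c - c)); exists c => //; exists c.
by move=> z [a Ca [b Cb <-]]; apply: H.
Qed.

Lemma dw_ge0 C B y : bnd C B -> C !=set0 -> 0 <= dir_width y C.
Proof.
move=> hB [c Cc]. apply: le_trans (dw_ub y hB Cc Cc).
by rewrite /dot /= !subrr !mulr0 addr0.
Qed.

Lemma attain_max C y : compact C -> C !=set0 ->
  exists2 p, C p & forall x, C x -> dot y x <= dot y p.
Proof.
move=> cC [c Cc].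
set A := (fun x => dot y x) @` C.
have cA : compact A.
  apply: continuous_compact => //. apply: continuous_subspaceT. exact: lin_cont.
have A0 : A !=set0 by exists (dot y c); exists c.
have hs := compact_has_sup A0 cA.
have : A (sup A).
  apply: (compact_closed (@Rhausdorff R) cA). apply: closure_sup => //. by case: hs.
case=> p Cp hp. exists p => // x Cx. rewrite hp. apply: sup_upper_bound => //. by exists x.
Qed.

Lemma int_small (k : int) : `|k%:~R : R| < 1 -> k = 0.
Proof.
rewrite -intr_norm => h.
have : (`|k| < 1)%R by rewrite -(ltr_int R).
case: k {h} => [[|n]|n] //=.
Qed.

Lemma int_big (k : int) : k <> 0 -> 1 <= `|k%:~R : R|.
Proof.
move=> k0. rewrite leNgt. apply/negP => /int_small. done.
Qed.


Lemma enorm_le (z : pt) : enorm z <= `|z.1| + `|z.2|.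
Proof.
rewrite /enorm /dot -[X in _ <= X]ger0_norm ?addr_ge0 // -sqrtr_sqr.
apply: ler_wsqrtr.
have h1 : `|z.1| * `|z.1| = z.1 * z.1 by rewrite -normrM ger0_norm // -expr2 sqr_ge0.
have h2 : `|z.2| * `|z.2| = z.2 * z.2 by rewrite -normrM ger0_norm // -expr2 sqr_ge0.
have := normr_ge0 z.1; have := normr_ge0 z.2. rewrite expr2. nra.
Qed.

Section Lat.
Variable L : set pt.
Hypothesis hL : is_lattice L.

Lemma lat0 : L 0. Proof. by case: hL. Qed.
Lemma latB x y : L x -> L y -> L (x - y). Proof. by case: hL => _ H _ _; apply: H. Qed.
Lemma latN x : L x -> L (- x). Proof. by move=> Lx; rewrite -sub0r; apply: latB => //; exact: lat0. Qed.
Lemma latD x y : L x -> L y -> L (x + y).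
Proof. by move=> Lx Ly; rewrite -[y]opprK; apply: latB => //; apply: latN. Qed.

Lemma scl_nat_lat (n : nat) x : L x -> L (scl n%:R x).
Proof.
move=> Lx; elim: n => [|n IH].
  have -> : scl 0%:R x = 0 by apply: pt_eq; rewrite /scl /= mul0r.
  exact: lat0.
have -> : scl n.+1%:R x = scl n%:R x + x.
  by apply: pt_eq; rewrite /scl /= -addn1 natrD mulrDl mul1r.
exact: latD.
Qed.

Lemma scl_int_lat (k : int) x : L x -> L (scl k%:~R x).
Proof.
move=> Lx; case: k => n.
  exact: scl_nat_lat.
have -> : scl (Negz n)%:~R x = - scl n.+1%:R x.
  by apply: pt_eq; rewrite /scl /= NegzE mulrNz mulNr.
exact/latN/scl_nat_lat.
Qed.


Lemma fr_bounds (r : R) : 0 <= r - (Num.floor r)%:~R < 1.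
Proof. have := floor_le r; have := floorD1_gt r; rewrite rmorphD /= rmorph1. lra. Qed.

Lemma small_aux (A B U1 U2 V1 V2 iM e : R) : 0 <= A -> 0 <= B -> A < iM -> B < iM ->
  0 <= U1 -> 0 <= U2 -> 0 <= V1 -> 0 <= V2 -> iM * (U1 + U2 + V1 + V2) < e ->
  A * U1 + B * V1 + (A * U2 + B * V2) < e.
Proof.
move=> A0 B0 Ai Bi u1 u2 v1 v2 h.
have : A * (U1 + U2) <= iM * (U1 + U2) by apply: ler_wpM2r; [lra | exact: ltW].
have : B * (V1 + V2) <= iM * (V1 + V2) by apply: ler_wpM2r; [lra | exact: ltW].
rewrite !mulrDr in h *. lra.
Qed.

Lemma dual_nonempty : exists y, dual_lattice L y /\ y <> 0.
Proof.
case: hL => _ _ [e e0 He] [u [v [Lu Lv dn0]]].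
have [d dE] : exists d, d = u.1 * v.2 - u.2 * v.1 by eexists.
have hd : d != 0 by rewrite dE.
pose al (z : pt) := (z.1 * v.2 - z.2 * v.1) / d.
pose be (z : pt) := (u.1 * z.2 - u.2 * z.1) / d.
have id1 z : z.1 = al z * u.1 + be z * v.1 by rewrite /al /be dE; field.
have id2 z : z.2 = al z * u.2 + be z * v.2 by rewrite /al /be dE; field.
set K := `|u.1| + `|u.2| + `|v.1| + `|v.2|.
set m := Num.trunc (K / e).
have Mgt : K / e < m.+1%:R by apply: truncnS_gt.
have M0 : (0 : R) < m.+1%:R by rewrite ltr0n.
set M := (m.+1%:R : R) in Mgt M0 *.
have small z : `|al z| < M^-1 -> `|be z| < M^-1 -> enorm z < e.
  move=> ha hb. apply: le_lt_trans (enorm_le z) _.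
  have h1 : `|z.1| <= `|al z| * (`|u.1|) + `|be z| * `|v.1|.
    by rewrite {1}id1; apply: le_trans (ler_normD _ _) _; rewrite !normrM.
  have h2 : `|z.2| <= `|al z| * (`|u.2|) + `|be z| * `|v.2|.
    by rewrite {1}id2; apply: le_trans (ler_normD _ _) _; rewrite !normrM.
  have hK : K < e * M.
    have -> : K = (K / e) * e by field; rewrite gt_eqF.
    by rewrite mulrC ltr_pM2l.
  have iM : M^-1 * M = 1 by rewrite mulVf // gt_eqF.
  have iM0 : 0 < M^-1 by rewrite invr_gt0.
  have q1 : M^-1 * K < e.
    have : M^-1 * K < M^-1 * (e * M) by rewrite ltr_pM2l.
    by rewrite mulrA [M^-1 * e]mulrC -mulrA iM mulr1.
  apply: (le_lt_trans (lerD h1 h2)).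
  apply: (small_aux _ _ _ _ _ _ _ _ q1) => //; exact: normr_ge0.
pose fr (r : R) := r - (Num.floor r)%:~R.
pose F (r : R) := Num.floor (M * fr r).
have Fb r : (0 <= F r)%R /\ (F r < m.+1%:Z)%R.
  have := fr_bounds r; rewrite -/(fr r) => /andP [f0 f1].
  rewrite /F floor_ge0 floor_lt_int; split; first by rewrite mulr_ge0 // ltW.
  by rewrite /M -[X in _ < X]mulr1 ltr_pM2l.
have close r1 r2 : F r1 = F r2 -> `|fr r1 - fr r2| < M^-1.
  move=> h.
  have := floor_le (M * fr r1); have := floorD1_gt (M * fr r1).
  have := floor_le (M * fr r2); have := floorD1_gt (M * fr r2).
  rewrite -/(F r1) -/(F r2) h !rmorphD /= !rmorph1 => q1 q2 q3 q4.
  have : `|M * fr r1 - M * fr r2| < 1 by rewrite ltr_norml; apply/andP; split; lra.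
  by rewrite -mulrBr normrM gtr0_norm // -ltr_pdivlMl // mulr1.
have key x : L x -> exists n : nat, (0 < n <= m.+1 * m.+1)%N /\ exists c : int, n%:R * al x = c%:~R.
  move=> Lx.
  pose g (k : 'I_(m.+1 * m.+1).+1) :=
    ((inord `|F (k%:R * al x)%R|%N : 'I_m.+1), (inord `|F (k%:R * be x)%R|%N : 'I_m.+1)).
  have step (k1 k2 : 'I_(m.+1 * m.+1).+1) : (k1 < k2)%N -> g k1 = g k2 ->
      exists n : nat, (0 < n <= m.+1 * m.+1)%N /\ exists c : int, n%:R * al x = c%:~R.
    move=> k12 [h1 h2].
    have ee (r1 r2 : R) : (inord `|F r1|%N : 'I_m.+1) = inord `|F r2|%N -> F r1 = F r2.
      move=> /(congr1 val) /=.
      have [g1 g2] := Fb r1; have [g3 g4] := Fb r2.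
      rewrite !inordK; [lia | lia | lia].
    have ca := close _ _ (ee _ _ h1); have cb := close _ _ (ee _ _ h2).
    set c1 := Num.floor (k2%:R * al x) - Num.floor (k1%:R * al x).
    set c2 := Num.floor (k2%:R * be x) - Num.floor (k1%:R * be x).
    set n := (k2 - k1)%N.
    have nE0 : (n%:R : R) = k2%:R - k1%:R by rewrite natrB // ltnW.
    have nE : ((n%:Z)%:~R : R) = k2%:R - k1%:R := nE0.
    pose z := scl (n%:Z)%:~R x - scl c1%:~R u - scl c2%:~R v.
    have Lz : L z by apply: latB; [apply: latB|]; apply: scl_int_lat.
    have alz : al z = - (fr (k1%:R * al x) - fr (k2%:R * al x)).
      rewrite /al /z /scl /fr /= /c1 !rmorphB /=. rewrite nE /al dE. by field.
    have bez : be z = - (fr (k1%:R * be x) - fr (k2%:R * be x)).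
      rewrite /be /z /scl /fr /= /c2 !rmorphB /= nE /be dE. by field.
    have z0 : z = 0 by apply: He => //; apply: small; rewrite ?alz ?bez normrN.
    exists n; split.
      have := ltn_ord k2. rewrite /n. lia.
    exists c1. have : al z = 0 by rewrite z0 /al /= mul0r mul0r subr0 mul0r.
    rewrite /al /z /scl /= nE /al => h.
    have : (k2%:R - k1%:R) * ((x.1 * v.2 - x.2 * v.1) / d) - c1%:~R = 0.
      rewrite -h dE. by field.
    by move/eqP; rewrite subr_eq0 => /eqP <-; rewrite nE0.
  have : ~~ injectiveb g.
    apply/negP => /injectiveP /leq_card. by rewrite card_prod !card_ord ltnn.
  move/injectivePn => [k1 [k2 k12 gk]].
  have [lt|lt] : (k1 < k2)%N \/ (k2 < k1)%N.
    move: k12; rewrite neq_ltn => /orP [] ->; by [left|right].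
  - exact: (step _ _ lt gk).
  - exact: (step _ _ lt (esym gk)).
set N := (m.+1 * m.+1)`!.
exists (scl N%:R (v.2 / d, - v.1 / d)); split.
  move=> x Lx. have [n [/andP [n0 nM] [c hc]]] := key x Lx.
  have hN : N = (N %/ n * n)%N by rewrite divnK // dvdn_fact // n0.
  move: hN; set q := (N %/ n)%N => hN.
  exists (q%:Z * c).
  rewrite rmorphM /= -hc /dot /scl /= hN natrM /al.
  have -> : ((q%:Z)%:~R : R) = q%:R by [].
  by field.
move=> /(congr1 (fun p : pt => (p.1, p.2))) /= [h1 h2].
have hN : (N%:R : R) != 0 by rewrite pnatr_eq0 -lt0n fact_gt0.
have : v.2 = 0.
  have : N%:R * (v.2 / d) * (d / N%:R) = 0 by rewrite h1 mul0r.
  move=> <-. field. by apply/andP.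
have : v.1 = 0.
  have : N%:R * (- v.1 / d) * (- d / N%:R) = 0 by rewrite h2 mul0r.
  move=> <-. field. by apply/andP.
move=> e1 e2. move: dn0. by rewrite e1 e2 !mulr0 subr0 eqxx.
Qed.

End Lat.

Lemma dot_sym u w : dot u w = dot w u.
Proof. by rewrite /dot mulrC [u.2 * _]mulrC. Qed.
Lemma dotBr (y' : pt) a b : dot y' (a - b) = dot y' a - dot y' b.
Proof. rewrite /dot /=. ring. Qed.
Lemma dotDr (y' : pt) a b : dot y' (a + b) = dot y' a + dot y' b.
Proof. rewrite /dot /=. ring. Qed.
Lemma dot_scl (y' : pt) t u : dot y' (scl t u) = t * dot y' u.
Proof. rewrite /dot /scl /=. ring. Qed.
Lemma dotNr (y' : pt) a : dot y' (- a) = - dot y' a.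
Proof. rewrite /dot /=. ring. Qed.

Lemma dot_pos (u : pt) : u <> 0 -> 0 < dot u u.
Proof.
case: u => u1 u2 hu; rewrite /dot /=.
have [h1|h1] := eqVneq u1 0.
  have [h2|h2] := eqVneq u2 0; first by exfalso; apply: hu; rewrite h1 h2.
  have : 0 < u2 * u2 by rewrite -expr2 exprn_even_gt0.
  have : 0 <= u1 * u1 by rewrite -expr2 sqr_ge0.
  lra.
have : 0 < u1 * u1 by rewrite -expr2 exprn_even_gt0.
have : 0 <= u2 * u2 by rewrite -expr2 sqr_ge0.
lra.
Qed.

Lemma dot_ge0 (u : pt) : 0 <= dot u u.
Proof.
rewrite /dot; have : 0 <= u.1 * u.1 by rewrite -expr2 sqr_ge0.
have : 0 <= u.2 * u.2 by rewrite -expr2 sqr_ge0. lra.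
Qed.

Lemma enorm_scl t u : 0 <= t -> enorm (scl t u) = t * enorm u.
Proof.
move=> t0; rewrite /enorm.
have -> : dot (scl t u) (scl t u) = t ^+ 2 * dot u u by rewrite /dot /scl /=; ring.
by rewrite sqrtrM ?sqr_ge0 // sqrtr_sqr ger0_norm.
Qed.

Lemma enorm_pos u : u <> 0 -> 0 < enorm u.
Proof. by move=> /dot_pos h; rewrite /enorm sqrtr_gt0. Qed.

Lemma par2 (v x w : pt) : v <> 0 -> dot v x = 0 -> dot v w = 0 -> w <> 0 ->
  x = scl (dot w x / dot w w) w.
Proof.
move=> v0 hx hw w0.
have ww := dot_pos w0.
have det : x.1 * w.2 - x.2 * w.1 = 0.
  have hv := dot_pos v0.
  have e1 : (x.1 * w.2 - x.2 * w.1) * v.1 = 0.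
    have -> : (x.1 * w.2 - x.2 * w.1) * v.1 = w.2 * dot v x - x.2 * dot v w by rewrite /dot; ring.
    by rewrite hx hw !mulr0 subr0.
  have e2 : (x.1 * w.2 - x.2 * w.1) * v.2 = 0.
    have -> : (x.1 * w.2 - x.2 * w.1) * v.2 = x.1 * dot v w - w.1 * dot v x by rewrite /dot; ring.
    by rewrite hx hw !mulr0 subr0.
  move: hv; rewrite /dot. move: e1 e2. set X := (x.1 * w.2 - x.2 * w.1). move=> e1 e2 hv.
  have : X * X * (v.1 * v.1 + v.2 * v.2) = 0.
    have -> : X * X * (v.1 * v.1 + v.2 * v.2) = X * (X * v.1) * v.1 + X * (X * v.2) * v.2 by ring.
    by rewrite e1 e2 !mulr0 !mul0r addr0.
  have hv0 : v.1 * v.1 + v.2 * v.2 != 0 by rewrite gt_eqF.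
  by move/eqP; rewrite mulf_eq0 (negbTE hv0) orbF mulf_eq0 orbb => /eqP.
have hne : w.1 * w.1 + w.2 * w.2 != 0 by rewrite gt_eqF.
apply: pt_eq; rewrite /scl /dot /=.
  have E : x.1 * (w.1 * w.1 + w.2 * w.2) = (w.1 * x.1 + w.2 * x.2) * w.1.
    have -> : x.1 * (w.1 * w.1 + w.2 * w.2) = w.1 * (w.1 * x.1 + w.2 * x.2) + w.2 * (x.1 * w.2 - x.2 * w.1) by ring.
    by rewrite det mulr0 addr0 mulrC.
  by rewrite -[LHS](mulfK hne) E mulrAC.
have E : x.2 * (w.1 * w.1 + w.2 * w.2) = (w.1 * x.1 + w.2 * x.2) * w.2.
  have -> : x.2 * (w.1 * w.1 + w.2 * w.2) = w.2 * (w.1 * x.1 + w.2 * x.2) - w.1 * (x.1 * w.2 - x.2 * w.1) by ring.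
  by rewrite det mulr0 subr0 mulrC.
by rewrite -[LHS](mulfK hne) E mulrAC.
Qed.

Lemma seg_ends C a b : seg_in C a b -> C a /\ C b.
Proof.
move=> h; split.
  have := h 0; rewrite lexx ler01 => /(_ isT).
  by have -> : a + scl 0 (b - a) = a by apply: pt_eq; rewrite /scl /= mul0r addr0.
have := h 1; rewrite lexx ler01 => /(_ isT).
by have -> : a + scl 1 (b - a) = b by apply: pt_eq; rewrite /scl /= mul1r addrC subrK.
Qed.


Lemma nbhs_half (f : pt -> R) (al be c ga : R) w :
  (forall x, f x = al * x.1 + be * x.2 + c) -> ga < f w -> nbhs w [set x | ga <= f x].
Proof.
move=> hf hw. apply/nbhs_pt.
set S := `|al| + `|be|.
have S0 : 0 <= S by have := normr_ge0 al; have := normr_ge0 be; rewrite /S; lra.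
have S1 : 0 < S + 1 by lra.
have fg : 0 < f w - ga by lra.
exists ((f w - ga) / (S + 1)); first by rewrite divr_gt0.
move=> w' h1 h2 /=.
have r0 : 0 <= (f w - ga) / (S + 1) by rewrite divr_ge0 // ltW.
set r := (f w - ga) / (S + 1) in h1 h2 r0.
have hr : r * (S + 1) = f w - ga by rewrite /r divfK // gt_eqF.
have q1 := mul_le_abs (- al) (ltW h1). have q2 := mul_le_abs (- be) (ltW h2).
rewrite !normrN in q1 q2.
have : f w' = f w + al * (w'.1 - w.1) + be * (w'.2 - w.2) by rewrite !hf; ring.
move=> ->. move: hr q1 q2; rewrite /S. nra.
Qed.

Lemma nbhs_convex C (z z0 : pt) (lam : R) : convex2 C -> nbhs z C -> C z0 -> 0 < lam -> lam <= 1 ->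
  nbhs (z0 + scl lam (z - z0)) C.
Proof.
move=> cv /nbhs_pt [r r0 hr] Cz0 l0 l1. apply/nbhs_pt.
exists (lam * r); first by rewrite mulr_gt0.
move=> w' h1 h2.
set w := z0 + scl lam (z - z0) in h1 h2.
have hl : lam != 0 by rewrite gt_eqF.
set z' := z + scl lam^-1 (w' - w).
have Cz' : C z'.
  have E1 : z'.1 - z.1 = lam^-1 * (w'.1 - w.1) by rewrite /z' /scl /=; ring.
  have E2 : z'.2 - z.2 = lam^-1 * (w'.2 - w.2) by rewrite /z' /scl /=; ring.
  apply: hr.
    by rewrite E1 normrM gtr0_norm ?invr_gt0 // mulrC ltr_pdivrMr // mulrC.
  by rewrite E2 normrM gtr0_norm ?invr_gt0 // mulrC ltr_pdivrMr // mulrC.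
have -> : w' = z0 + scl lam (z' - z0).
  apply: pt_eq; rewrite /z' /w /scl /=; by field.
apply: cv => //; rewrite l1 ltW //.
Qed.


Lemma halfplane_body C (f : pt -> R) (al be c ga : R) z0 :
  (forall x, f x = al * x.1 + be * x.2 + c) -> convex_body C -> C z0 -> ga < f z0 ->
  convex_body (C `&` [set x | ga <= f x]).
Proof.
move=> hf [cC cv [z intz]] Cz0 hz0.
have Hcl : closed [set x | ga <= f x].
  have -> : [set x | ga <= f x] = (fun x : pt => al * x.1 + be * x.2) @^-1` [set r | ga - c <= r].
    apply/seteqP; split => x /=; rewrite hf; lra.
  apply: preimage_closed; last exact: closed_ge.
  move=> x _; exact: lin_cont.
split.
- exact: compact_closedI.
- move=> a b t [Ca ha] [Cb hb] ht; split; first exact: cv.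
  move: ha hb; rewrite /= !hf /scl /=.
  have -> : al * (a.1 + t * (b.1 - a.1)) + be * (a.2 + t * (b.2 - a.2)) + c = (1 - t) * (al * a.1 + be * a.2 + c) + t * (al * b.1 + be * b.2 + c) by ring.
  move: ht => /andP [t0 t1] ha hb. nra.
- set d := f z - f z0. set rho := f z0 - ga.
  have rho0 : 0 < rho by rewrite /rho subr_gt0.
  have dn := normr_ge0 d.
  have s0 : 0 < rho + `|d| by lra.
  set lam := rho / (rho + `|d|).
  have l0 : 0 < lam by rewrite divr_gt0.
  have hl : lam * (rho + `|d|) = rho by rewrite /lam divfK // gt_eqF.
  have l1 : lam <= 1.
    rewrite /lam ler_pdivrMr // mul1r; lra.
  exists (z0 + scl lam (z - z0)).
  have h1 : nbhs (z0 + scl lam (z - z0)) C := nbhs_convex cv intz Cz0 l0 l1.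
  suff h2 : nbhs (z0 + scl lam (z - z0)) [set x | ga <= f x] by exact: filterI h1 h2.
  apply: (nbhs_half hf).
  have -> : f (z0 + scl lam (z - z0)) = f z0 + lam * d by rewrite /d !hf /scl /=; ring.
  have : lam * (- d) <= lam * `|d| by apply: ler_wpM2l; [exact: ltW | rewrite -[X in _ <= X]normrN; exact: ler_norm].
  have : ga = f z0 - rho by rewrite /rho; ring.
  move=> ->. nra.
Qed.

Lemma sum_cont (e : pt) : continuous (fun p : pt * R => p.1 + scl p.2 e).
Proof.
have -> : (fun p : pt * R => p.1 + scl p.2 e) = (fun p => (p.1.1 + p.2 * e.1, p.1.2 + p.2 * e.2)).
  by apply: funext => p; apply: pt_eq.
move=> p.
apply: (@cvg_pair _ _ _ _ (nbhs (p.1.1 + p.2 * e.1)) (nbhs (p.1.2 + p.2 * e.2))).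
  apply: cvgD; last by apply: cvgMl; exact: cvg_snd.
  exact: (cvg_comp _ _ cvg_fst cvg_fst).
apply: cvgD; last by apply: cvgMl; exact: cvg_snd.
exact: (cvg_comp _ _ cvg_fst cvg_snd).
Qed.

Definition sumset C (e : pt) := (fun p : pt * R => p.1 + scl p.2 e) @` (C `*` `[0, 1]%classic).

Lemma sub_sumset C e : C `<=` sumset C e.
Proof.
move=> x Cx; exists (x, 0); first by split => //=; rewrite in_itv /= lexx ler01.
by apply: pt_eq; rewrite /scl /= mul0r addr0.
Qed.

Lemma sum_body C (e : pt) : convex_body C -> convex_body (sumset C e).
Proof.
move=> [cC cv [z intz]]; split.
- apply: continuous_compact; last exact: (compact_setX cC (@segment_compact R 0 1)).
  apply: continuous_subspaceT; exact: sum_cont.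
- move=> a b t [[c1 s1] [Cc1 s1i] <-] [[c2 s2] [Cc2 s2i] <-] ht.
  exists (c1 + scl t (c2 - c1), s1 + t * (s2 - s1)).
    split; first exact: cv.
    move: s1i s2i ht; rewrite /= !in_itv /= => /andP [a0 a1] /andP [b0 b1] /andP [t0 t1].
    apply/andP; split; nra.
  by apply: pt_eq; rewrite /scl /=; ring.
- exists z. exact: (interiorS (@sub_sumset C e)).
Qed.


Definition WS L C := [set dir_width y C | y in [set y | dual_lattice L y /\ y <> 0]].

Lemma WS_lb L C B : bnd C B -> C !=set0 -> has_lbound (WS L C).
Proof. move=> hB ne; exists 0 => w [y _ <-]; exact: dw_ge0 hB ne. Qed.

Lemma WS_ne L C : is_lattice L -> WS L C !=set0.
Proof. move=> hL; have [y [dy y0]] := dual_nonempty hL; by exists (dir_width y C); exists y. Qed.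

Lemma bnd_sub C C' B : C' `<=` C -> bnd C B -> bnd C' B.
Proof. by move=> s hB x /s /hB. Qed.

Lemma dw_mono C C' B y : C' `<=` C -> bnd C B -> C' !=set0 -> dir_width y C' <= dir_width y C.
Proof. move=> s hB ne; apply: dw_lub => // a b /s Ca /s Cb; exact: dw_ub hB Ca Cb. Qed.

Lemma abs_le_dw C B y a b : bnd C B -> C a -> C b -> `|dot y (b - a)| <= dir_width y C.
Proof.
move=> hB Ca Cb. rewrite ler_norml; apply/andP; split; last exact: dw_ub hB Cb Ca.
rewrite lerNl. have := dw_ub y hB Ca Cb.
by have -> : dot y (a - b) = - dot y (b - a) by rewrite !dotBr opprB.
Qed.

Lemma reduced_contra L C B (a1 b1 v y p q o : pt) (l1 : R) (f : pt -> R) (al be c ga : R) :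
  is_lattice L -> convex_body C -> bnd C B -> lattice_reduced L C ->
  (forall x, f x = al * x.1 + be * x.2 + c) ->
  C a1 -> C b1 -> ga < f a1 -> ga <= f b1 ->
  C p -> C q -> ga <= f p -> ga <= f q ->
  (forall x, C x -> dot y x <= dot y p) -> (forall x, C x -> dot y q <= dot y x) ->
  C o -> f o < ga ->
  L v -> v <> 0 -> y <> 0 -> dot y v = 0 ->
  b1 - a1 = scl l1 v -> lattice_width L C < `|l1| -> False.
Proof.
move=> hL hC hB hred hf Ca1 Cb1 fa1 fb1 Cp Cq fp fq hp hq Co fo Lv v0 y0 yv bav hW.
set C' := C `&` [set x | ga <= f x].
have cb' : convex_body C' := halfplane_body hf hC Ca1 fa1.
have sub : C' `<=` C by move=> x [].
have bnd' : bnd C' B := bnd_sub sub hB.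
have ne' : C' !=set0 by exists a1; split => //; exact: ltW.
have ne : C !=set0 by exists a1.
have Ca1' : C' a1 by split => //; exact: ltW.
have Cb1' : C' b1 by split.
have Cp' : C' p by split.
have Cq' : C' q by split.
set W := lattice_width L C.
have W0 : 0 <= W by apply: lb_le_inf; [exact: WS_ne | move=> w [y' _ <-]; exact: dw_ge0 hB ne].
apply: hred; exists C'; split => //.
  split => // hCC. have [_ /=] := hCC o Co. by rewrite leNgt fo.
apply/eqP; rewrite eq_le; apply/andP; split.
  apply: lb_le_inf; first exact: WS_ne.
  move=> w [y' dy' <-].
  apply: le_trans (dw_mono y' sub hB ne').
  apply: ge_inf; first exact: WS_lb bnd' ne'.
  by exists y'.
apply: lb_le_inf; first exact: WS_ne.
move=> w [y' [dy' y'0] <-].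
have Wle : W <= dir_width y' C by apply: ge_inf; [exact: WS_lb hB ne | exists y'].
have [k hk] := dy' v Lv.
have [k0|k0] := eqVneq k 0.
  have vy' : dot v y' = 0 by rewrite hk k0.
  have vy : dot v y = 0 by rewrite dot_sym.
  have y'E := par2 v0 vy' vy y0.
  set mu := dot y y' / dot y y in y'E.
  set M := dot y p; set m := dot y q.
  have dwy x : dot y' x = mu * dot y x by rewrite y'E dot_sym dot_scl dot_sym.
  apply: (le_trans Wle).
  apply: (@le_trans _ _ (`|mu| * (M - m))).
    apply: dw_lub => // a b Ca Cb.
    rewrite dotBr !dwy -mulrBr. apply: mul_le_abs.
    have := hp _ Ca; have := hp _ Cb; have := hq _ Ca; have := hq _ Cb.
    rewrite ler_norml -/M -/m. move=> *; apply/andP; split; lra.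
  have [mu0|mu0] := leP 0 mu.
    rewrite ger0_norm //. have := dw_ub y' bnd' Cp' Cq'. by rewrite dotBr !dwy -mulrBr.
  rewrite ltr0_norm //. have := dw_ub y' bnd' Cq' Cp'. rewrite dotBr !dwy -mulrBr.
  by have -> : - mu * (M - m) = mu * (m - M) by ring.
apply: ltW. apply: (lt_le_trans hW).
apply: le_trans (abs_le_dw y' bnd' Ca1' Cb1').
rewrite bav dot_scl dot_sym hk normrM.
rewrite -[X in X <= _]mulr1 ler_wpM2l //. apply: int_big; exact/eqP.
Qed.


Definition DS L C := [set l | exists a b, seg_in C a b /\ lattice_segment L a b l].

Lemma prim_len L w v : prim_gen L w v -> w <> 0 ->
  0 < enorm w / enorm v /\ w = scl (enorm w / enorm v) v.
Proof.
case=> Lv v0 [t t0 vt] _ w0.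
have ew := enorm_pos w0.
have ev : enorm v = t * enorm w by rewrite vt enorm_scl // ltW.
split; first by rewrite divr_gt0 // enorm_pos.
rewrite ev vt; apply: pt_eq; rewrite /scl /=; field.
all: by rewrite ?(gt_eqF ew) ?(gt_eqF t0).
Qed.

Lemma scl_inj c c' (v : pt) : v <> 0 -> scl c v = scl c' v -> c = c'.
Proof.
move=> v0 /(congr1 (fun p : pt => (p.1, p.2))) [h1 h2].
have := dot_pos v0; rewrite /dot => hv.
have : (c - c') * (v.1 * v.1 + v.2 * v.2) = 0.
  rewrite /scl /= in h1 h2.
  have -> : (c - c') * (v.1 * v.1 + v.2 * v.2) = (c * v.1 - c' * v.1) * v.1 + (c * v.2 - c' * v.2) * v.2 by ring.
  by rewrite h1 h2 !subrr !mul0r addr0.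
move/eqP; rewrite mulf_eq0 (gt_eqF hv) orbF subr_eq0 => /eqP //.
Qed.


Lemma complete_contra L C B (a b v y p q : pt) (l : R) :
  is_lattice L -> convex_body C -> bnd C B -> lattice_complete L C ->
  has_sup (DS L C) -> DS L C l ->
  prim_gen L (b - a) v -> dual_lattice L y -> y <> 0 -> dot y v = 0 ->
  C p -> C q -> dot y q < dot y p ->
  (forall x, C x -> dot y x <= dot y p) -> (forall x, C x -> dot y q <= dot y x) ->
  dir_width y C < lattice_diam L C -> False.
Proof.
move=> hL hC hB hcomp hs DSl pg dy y0 yv Cp Cq pq hp hq hdw.
have [cC cv _] := hC.
case: (pg) => Lv v0 [t0 t00 vt] prim.
have DE : lattice_diam L C = sup (DS L C) by [].
set D := lattice_diam L C in hdw DE.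
have ne : C !=set0 by exists p.
have dw0 := dw_ge0 y hB ne.
have D0 : 0 < D by apply: le_lt_trans hdw.
have vv := dot_pos v0.
have vvn : dot v v != 0 by rewrite gt_eqF.
have yy := dot_pos y0.
have yyn : dot y y != 0 by rewrite gt_eqF.
have vy : dot v y = 0 by rewrite dot_sym.
pose tau x := dot v x / dot v v.
have horiz c1 c2 : C c1 -> C c2 -> dot y (c2 - c1) = 0 -> tau (c2 - c1) <= D.
  move=> C1 C2 h0.
  have kE := par2 y0 h0 yv v0.
  rewrite -/(tau _) in kE.
  set T := tau (c2 - c1) in kE *.
  have [le|gt] := leP T 0; first by apply: le_trans le (ltW D0).
  rewrite DE. apply: (sup_upper_bound hs).
  exists c1, c2; split; first by move=> t ht; exact: cv.
  split.
    apply/eqP => e12.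
    have : scl T v = scl 0 v by rewrite -kE e12 subrr; apply: pt_eq; rewrite /scl /= mul0r.
    move/(scl_inj v0) => T0. by move: gt; rewrite T0 ltxx.
  exists v; split.
    split => //.
      exists T^-1; first by rewrite invr_gt0.
      rewrite [in RHS]kE; apply: pt_eq; rewrite /scl /= mulrA mulVf ?mul1r // gt_eqF //.
    move=> z Lz [s0 zs]. apply: prim => //. exists (s0 * T * t0).
    rewrite zs {1}kE vt; apply: pt_eq; rewrite /scl /=; ring.
  rewrite [in RHS]kE enorm_scl ?ltW // mulfK // gt_eqF // enorm_pos //.
have pair c1 c2 c3 c4 : C c1 -> C c2 -> C c3 -> C c4 -> 0 < dot y (c2 - c1) -> dot y (c4 - c3) < 0 ->
    (tau (c2 - c1) - D) / dot y (c2 - c1) <= (tau (c4 - c3) - D) / dot y (c4 - c3).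
  move=> C1 C2 C3 C4 h1 h2.
  set s1 := dot y (c2 - c1) in h1 *; set s2 := dot y (c4 - c3) in h2 *.
  set t1 := tau (c2 - c1); set t2 := tau (c4 - c3).
  have s12 : 0 < s1 - s2 by lra.
  set lam := - s2 / (s1 - s2).
  have l0 : 0 <= lam by rewrite /lam; apply: divr_ge0; lra.
  have l1 : lam <= 1 by rewrite /lam ler_pdivrMr // mul1r; lra.
  have hl : lam * (s1 - s2) = - s2 by rewrite /lam divfK // gt_eqF.
  have P1 : C (c4 + scl lam (c2 - c4)) by apply: cv => //; rewrite l0 l1.
  have P2 : C (c3 + scl lam (c1 - c3)) by apply: cv => //; rewrite l0 l1.
  have E : (c4 + scl lam (c2 - c4)) - (c3 + scl lam (c1 - c3)) = (c4 - c3) + scl lam ((c2 - c1) - (c4 - c3)).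
    by apply: pt_eq; rewrite /scl /=; ring.
  have hs0 : dot y ((c4 + scl lam (c2 - c4)) - (c3 + scl lam (c1 - c3))) = 0.
    rewrite E dotDr dot_scl (dotBr y (c2 - c1)) -/s1 -/s2. have h : lam * (s1 - s2) + s2 = 0 by rewrite hl; ring.
    by rewrite addrC.
  have := horiz _ _ P2 P1 hs0.
  have -> : tau ((c4 + scl lam (c2 - c4)) - (c3 + scl lam (c1 - c3))) = t2 + lam * (t1 - t2).
    rewrite /tau E dotDr dot_scl (dotBr v (c2 - c1)) /t1 /t2 /tau. clearbody lam. ring.
  move=> hle.
  have num : s1 * (t2 - D) - s2 * (t1 - D) <= 0.
    have : (t2 + lam * (t1 - t2) - D) * (s1 - s2) <= 0 by apply: mulr_le0_ge0; lra.
    have -> : (t2 + lam * (t1 - t2) - D) * (s1 - s2) = (t2 - D) * (s1 - s2) + (lam * (s1 - s2)) * (t1 - t2) by ring.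
    rewrite hl. move=> h. have -> : s1 * (t2 - D) - s2 * (t1 - D) = (t2 - D) * (s1 - s2) + - s2 * (t1 - t2) by ring.
    exact: h.
  rewrite -subr_ge0.
  have -> : (t2 - D) / s2 - (t1 - D) / s1 = (- (s1 * (t2 - D) - s2 * (t1 - D))) / (- (s1 * s2)).
    by field; rewrite (gt_eqF h1) (lt_eqF h2).
  apply: divr_ge0; first by rewrite oppr_ge0.
  rewrite oppr_ge0 ltW // pmulr_rlt0 //.
set P := [set r | exists c1 c2, [/\ C c1, C c2, 0 < dot y (c2 - c1) & r = (tau (c2 - c1) - D) / dot y (c2 - c1)]].
have hpq : 0 < dot y (p - q) by rewrite dotBr subr_gt0.
have hqp : dot y (q - p) < 0 by rewrite dotBr subr_lt0.
have Pne : P !=set0 by exists ((tau (p - q) - D) / dot y (p - q)); exists q, p; split.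
have hsP : has_sup P.
  split => //. exists ((tau (q - p) - D) / dot y (q - p)) => r [c1 [c2 [C1 C2 h ->]]].
  exact: pair.
set ka := sup P.
have supp c1 c2 : C c1 -> C c2 -> tau (c2 - c1) - ka * dot y (c2 - c1) <= D.
  move=> C1 C2.
  have [neg|pos|z0] := ltgtP (dot y (c2 - c1)) 0.
  - have : ka <= (tau (c2 - c1) - D) / dot y (c2 - c1).
      apply: ge_sup => // r [c3 [c4 [C3 C4 h ->]]]. exact: pair.
    set Y := (tau (c2 - c1) - D) / dot y (c2 - c1).
    have hY : Y * dot y (c2 - c1) = tau (c2 - c1) - D by rewrite /Y divfK // ltr0_neq0.
    move=> hk. have : 0 <= (Y - ka) * (- dot y (c2 - c1)) by apply: mulr_ge0; lra.
    rewrite mulrBl !mulrN hY. lra.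
  - have : (tau (c2 - c1) - D) / dot y (c2 - c1) <= ka.
      apply: sup_upper_bound => //. by exists c1, c2; split.
    set X := (tau (c2 - c1) - D) / dot y (c2 - c1).
    have hX : X * dot y (c2 - c1) = tau (c2 - c1) - D by rewrite /X divfK // gt_eqF.
    move=> hk. have : 0 <= (ka - X) * dot y (c2 - c1) by apply: mulr_ge0; lra.
    rewrite mulrBl hX. lra.
  - rewrite z0 mulr0 subr0. exact: horiz.
set dwy := dir_width y C in hdw dw0.
set eps := (D - dwy) / 2.
have eps0 : 0 < eps by rewrite /eps divr_gt0 // subr_gt0.
set e := scl eps (scl ka v + scl (dot y y)^-1 y).
have se : dot y e = eps.
  rewrite /e !dot_scl dotDr !dot_scl yv mulr0 add0r mulVf //. by rewrite mulr1.
have ve : dot v e = eps * ka * dot v v.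
  rewrite /e !dot_scl dotDr !dot_scl vy mulr0 addr0. by rewrite mulrA.
set C' := sumset C e.
have cb' : convex_body C' := sum_body e hC.
have sub : C `<=` C' := @sub_sumset C e.
have DSsub : DS L C `<=` DS L C'.
  move=> r [a2 [b2 [sab2 ls]]]; exists a2, b2; split => // t ht; apply: sub; exact: sab2.
have DSne : DS L C !=set0 by exists l.
have bound : forall l', DS L C' l' -> l' <= D.
  move=> l' [a2 [b2 [sab2 [ab2 [v1 [pg1 l'E]]]]]].
  have ba0 : b2 - a2 <> 0.
    move=> h; move: ab2; have -> : a2 = b2 by rewrite -[b2](subrK a2) h add0r.
    by rewrite eqxx.
  have [l'0 ba2] := prim_len pg1 ba0. rewrite -l'E in l'0 ba2.
  have [[[ca sa] [Cca sai] ae] [[cb sb] [Ccb sbi] be]] := seg_ends sab2.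
  move: sai sbi; rewrite /= !in_itv /= => /andP [sa0 sa1] /andP [sb0 sb1].
  have kkE : b2 - a2 = (cb - ca) + scl (sb - sa) e.
    by rewrite -ae -be; apply: pt_eq; rewrite /scl /=; ring.
  case: (pg1) => Lv1 v10 _ _.
  have [k1 hk1] := dy v1 Lv1.
  have [k10|k10] := eqVneq k1 0.
    have yv1 : dot y v1 = 0 by rewrite dot_sym hk1 k10.
    have v1E := par2 y0 yv1 yv v0.
    set cc := dot v v1 / dot v v in v1E.
    have [k' hk'] : exists k' : int, v1 = scl k'%:~R v.
      apply: prim => //. exists (cc * t0). rewrite v1E vt; apply: pt_eq; rewrite /scl /=; ring.
    have ck : cc = k'%:~R by apply: (scl_inj v0); rewrite -v1E -hk'.
    have k'0 : k' <> 0 by move=> k0; apply: v10; rewrite hk' k0; apply: pt_eq; rewrite /scl /= mul0r.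
    have cc1 : 1 <= `|cc| by rewrite ck; exact: int_big.
    have ell : dot v (cb - ca) / dot v v - ka * dot y (cb - ca) = l' * cc.
      have h1 : cb - ca = (b2 - a2) - scl (sb - sa) e by rewrite kkE addrK.
      rewrite h1 (dotBr v (b2 - a2)) (dot_scl v (sb - sa) e) ve (dotBr y (b2 - a2)) (dot_scl y (sb - sa) e) se ba2 !dot_scl v1E !dot_scl yv.
      clearbody cc e eps ka. by field.
    have ell2 : dot v (ca - cb) / dot v v - ka * dot y (ca - cb) = - (l' * cc).
      rewrite -ell.
      have -> : ca - cb = - (cb - ca) by rewrite opprB.
      rewrite !dotNr. by field.
    have s1 := supp _ _ Cca Ccb. have s2 := supp _ _ Ccb Cca.
    rewrite /tau ell in s1. rewrite /tau ell2 in s2.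
    have : `|l' * cc| <= D by rewrite ler_norml; apply/andP; split; lra.
    rewrite normrM gtr0_norm //. move=> h.
    apply: le_trans h. rewrite -[X in X <= _]mulr1 ler_wpM2l // ltW //.
  have : `|dot y (b2 - a2)| <= dwy + eps.
    rewrite kkE dotDr dot_scl se. apply: le_trans (ler_normD _ _) _.
    apply: lerD; first exact: abs_le_dw hB Cca Ccb.
    rewrite normrM (gtr0_norm eps0) -[X in _ <= X]mul1r; apply: ler_wpM2r; first exact: ltW.
    rewrite ler_norml; apply/andP; split; lra.
  rewrite ba2 dot_scl dot_sym hk1 normrM gtr0_norm //.
  move=> hb.
  have hk : 1 <= `|k1%:~R : R| by apply: int_big; exact/eqP.
  have : l' * 1 <= l' * `|k1%:~R : R| by apply: ler_wpM2l => //; exact: ltW.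
  rewrite mulr1.
  have : dwy + eps < D by rewrite /eps; lra.
  lra.
have hs' : has_sup (DS L C').
  split; first by exists l; exact: DSsub.
  by exists D => r /bound.
apply: hcomp; exists C'; split => //.
  split => // hC'C.
  have : C' (p + e).
    exists (p, 1); first by split => //=; rewrite in_itv /= ler01 lexx.
    by apply: pt_eq; rewrite /scl /= !mul1r.
  move/hC'C/hp. rewrite dotDr se. lra.
apply/eqP; rewrite eq_le; apply/andP; split.
  apply: ge_sup; first by exists l; exact: DSsub.
  exact: bound.
rewrite /lattice_diam -/(DS L C) -/(DS L C'). apply: sup_le => //.
by move=> x hx; exists x; split => //; exact: DSsub.
Qed.

End S.

Unset Implicit Arguments.

Theorem proposition5p1 (R : realType) (L C : set (R * R)%type) :
  is_lattice L -> convex_body C ->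
  lattice_reduced L C \/ lattice_complete L C ->
  lattice_diam L C <= lattice_width L C.
Proof.
move=> hL hC hRC.
have [cC cv [z intz]] := hC.
have [B B0 hB] := compact_bnd cC.
have Cz : C z := interior_subset intz.
have ne : C !=set0 by exists z.
have W0 : 0 <= lattice_width L C.
  apply: lb_le_inf; first exact: WS_ne. move=> w [y' _ <-]; exact: dw_ge0 hB ne.
case: (pselect (has_sup (DS L C))) => hs; last first.
  by rewrite /lattice_diam -/(DS L C) sup_out.
have DE : lattice_diam L C = sup (DS L C) by [].
have WE : lattice_width L C = inf (WS L C) by [].
rewrite leNgt; apply/negP => hWD.
set W := lattice_width L C in W0 hWD WE.
set D := lattice_diam L C in hWD DE.
have [l DSl lW] : exists2 l, DS L C l & W < l.
  have := @sup_adherent _ (DS L C) (D - W) _ hs.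
  rewrite subr_gt0 => /(_ hWD) [l hl hl']. exists l => //. rewrite -DE in hl'; lra.
case: (DSl) => a [b [sab [ab [v [pg lE]]]]].
have hinf : has_inf (WS L C) := conj (WS_ne _ hL) (WS_lb L hB ne).
have [w [y [dy y0] wE] wl] : exists2 w, WS L C w & w < l.
  have := @inf_adherent _ (WS L C) (l - W) _ hinf.
  rewrite subr_gt0 => /(_ lW) [w hw hw']. exists w => //. rewrite -WE in hw'; lra.
have ba0 : b - a <> 0.
  move=> h; move: ab; have -> : a = b by rewrite -[b](subrK a) h add0r.
  by rewrite eqxx.
have [l0 bav] := prim_len pg ba0. rewrite -lE in l0 bav.
have [Ca Cb] := seg_ends sab.
case: (pg) => Lv v0 _ _.
have [k hk] := dy v Lv.
have yv : dot y v = 0.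
  have : `|dot y (b - a)| < l by apply: le_lt_trans (abs_le_dw y hB Ca Cb) _; rewrite wE.
  rewrite bav dot_scl dot_sym hk normrM (gtr0_norm l0) -[X in _ < X]mulr1 ltr_pM2l // => /int_small k0.
  by rewrite k0.
have [p Cp hp] := attain_max y cC ne.
have [q Cq hq'] := attain_max (- y) cC ne.
have hq x : C x -> dot y q <= dot y x.
  move=> Cx; have := hq' x Cx; rewrite /dot /= !mulNr; lra.
have pq : dot y q < dot y p.
  have [r r0 hr] := (nbhs_pt z C).1 intz.
  set S := `|y.1| + `|y.2| + 1.
  have S0 : 0 < S by have := normr_ge0 y.1; have := normr_ge0 y.2; rewrite /S; lra.
  set de := r / S.
  have de0 : 0 < de by rewrite divr_gt0.
  have hdS : de * S = r by rewrite /de divfK // gt_eqF.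
  have Cz' : C (z + scl de y).
    apply: hr; rewrite /scl /= addrAC subrr add0r normrM gtr0_norm //.
      have : de * `|y.1| <= de * (S - 1) by apply: ler_wpM2l; [exact: ltW | rewrite /S; have := normr_ge0 y.2; lra].
      rewrite mulrBr mulr1 hdS; lra.
    have : de * `|y.2| <= de * (S - 1) by apply: ler_wpM2l; [exact: ltW | rewrite /S; have := normr_ge0 y.1; lra].
    rewrite mulrBr mulr1 hdS; lra.
  have := hp _ Cz'; have := hq _ Cz.
  rewrite dotDr dot_scl. have := dot_pos y0. move=> yy h1 h2.
  have : 0 < de * dot y y by rewrite mulr_gt0.
  lra.
case: hRC => [hred|hcomp]; last first.
  apply: (complete_contra hL hC hB hcomp hs DSl pg dy y0 yv Cp Cq pq hp hq).
  rewrite wE -/D DE. apply: lt_le_trans wl _. exact: sup_upper_bound.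
have vv := dot_pos v0.
have vvn : dot v v != 0 by rewrite gt_eqF.
pose tau x := dot v x / dot v v.
set h := dot y a.
set M := dot y p. set m := dot y q.
have Mm : 0 < M - m by rewrite subr_gt0.
set ka := (tau p - tau q) / (M - m).
pose g x := tau x - ka * (dot y x - h).
have hg x : g x = (v.1 / dot v v - ka * y.1) * x.1 + (v.2 / dot v v - ka * y.2) * x.2 + ka * h.
  rewrite /g /tau /dot. clearbody ka h. by field.
have gpq : g p = g q.
  rewrite /g -/M -/m /ka. clearbody h. by field; rewrite gt_eqF.
set de := (l - W) / (4 * l).
have de0 : 0 < de by rewrite /de divr_gt0 // ?subr_gt0 // mulr_gt0.
have hde : de * (4 * l) = l - W by rewrite /de divfK // gt_eqF // mulr_gt0.
have de1 : de <= 1 / 4.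
  have p4 : 0 < 4 * l by rewrite mulr_gt0.
  have h4 : 1 / 4 * (4 * l) = l by field.
  rewrite -(ler_pM2r p4) hde h4. lra.
have Ca' : C (a + scl de (b - a)) by apply: sab; apply/andP; split; lra.
have Cb' : C (a + scl (1 - de) (b - a)) by apply: sab; apply/andP; split; lra.
have tauD x t : tau (x + scl t (b - a)) = tau x + t * l.
  rewrite /tau bav dotDr !dot_scl. by field.
have yD x t : dot y (x + scl t (b - a)) = dot y x.
  by rewrite bav dotDr !dot_scl yv !mulr0 addr0.
have bE : b = a + scl 1 (b - a) by apply: pt_eq; rewrite /scl /= !mul1r addrC subrK.
have ga' : g (a + scl de (b - a)) = tau a + de * l by rewrite /g tauD yD /h subrr mulr0 subr0.
have gb' : g (a + scl (1 - de) (b - a)) = tau a + (1 - de) * l by rewrite /g tauD yD /h subrr mulr0 subr0.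
have ga : g a = tau a by rewrite /g /h subrr mulr0 subr0.
have gb : g b = tau a + l by rewrite bE /g tauD yD /h subrr mulr0 subr0 mul1r.
have bav' : (a + scl (1 - de) (b - a)) - (a + scl de (b - a)) = scl ((1 - 2 * de) * l) v.
  by rewrite bav; apply: pt_eq; rewrite /scl /=; ring.
have Wl : W < `|(1 - 2 * de) * l|.
  rewrite gtr0_norm; last by apply: mulr_gt0 => //; lra.
  have : (1 - 2 * de) * l = l - 2 * (de * l) by ring.
  move=> ->. have : de * l = (l - W) / 4.
    by rewrite -hde; field.
  move=> ->. lra.
have dl0 : 0 < de * l by rewrite mulr_gt0.
have hq4 : de * l <= 1 / 4 * l by apply: ler_wpM2r => //; exact: ltW.
have [hgp|hgp] := leP (tau a + l / 2) (g p).
  apply: (@reduced_contra R L C B _ _ v y p q a ((1 - 2 * de) * l) g _ _ _ (tau a + de * l / 2) hL hC hB hred hg Ca' Cb').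
  - rewrite ga'; lra.
  - rewrite gb'; lra.
  - exact: Cp.
  - exact: Cq.
  - lra.
  - rewrite -gpq; lra.
  - exact: hp.
  - exact: hq.
  - exact: Ca.
  - rewrite ga; lra.
  - exact: Lv.
  - exact: v0.
  - exact: y0.
  - exact: yv.
  - exact: bav'.
  - exact: Wl.
have hf x : - g x = (- (v.1 / dot v v - ka * y.1)) * x.1 + (- (v.2 / dot v v - ka * y.2)) * x.2 + - (ka * h).
  rewrite hg; ring.
have bav'' : (a + scl de (b - a)) - (a + scl (1 - de) (b - a)) = scl (- ((1 - 2 * de) * l)) v.
  by rewrite bav; apply: pt_eq; rewrite /scl /=; ring.
apply: (@reduced_contra R L C B _ _ v y p q b (- ((1 - 2 * de) * l)) (fun x => - g x) _ _ _ (- (tau a + l - de * l / 2)) hL hC hB hred hf Cb' Ca').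
- rewrite gb'; lra.
- rewrite ga'; lra.
- exact: Cp.
- exact: Cq.
- lra.
- rewrite -gpq; lra.
- exact: hp.
- exact: hq.
- exact: Cb.
- rewrite gb; lra.
- exact: Lv.
- exact: v0.
- exact: y0.
- exact: yv.
- exact: bav''.
- by rewrite normrN.
Qed.
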